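(* Let $n\geq 2$ and let $0<k_1<k_2<\cdots<k_r<n$ be integers; put $k_0=0$. Let $$\mathcal{W}^{\Theta}=\{w\in S_n:\ w(1)<\cdots<w(k_1),\ w(k_1+1)<\cdots<w(k_2),\ \dots,\ w(k_r+1)<\cdots<w(n)\}.$$ For $w\in\mathcal{W}^{\Theta}$ with code $\alpha=(\alpha_1,\dots,\alpha_{n-1})$, and for each $j\in\{1,\dots,r\}$, the sequence $\lambda^j(w)=(\alpha_{k_j},\alpha_{k_j-1},\dots,\alpha_{k_{j-1}+1})$ is a partition whose Ferrers diagram fits in a $(k_j-k_{j-1})\times(n-k_j)$ rectangle (at most $k_j-k_{j-1}$ parts, each at most $n-k_j$), and the map $w\mapsto(\lambda^1(w),\dots,\lambda^r(w))$ is a bijection from $\mathcal{W}^{\Theta}$ onto $\prod_{j=1}^{r}\mathcal{P}_j$, where $\mathcal{P}_j$ is the set of partitions whose Ferrers diagram fits in a $(k_j-k_{j-1})\times(n-k_j)$ rectangle.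
   Context: Permutations $w\in S_n$ are written in one-line notation $w=w(1)\cdots w(n)$. The code of $w$ is $\alpha=(\alpha_1,\dots,\alpha_{n-1})$ with $\alpha_i=\#\{k>i:\ w(k)<w(i)\}$. A partition is a weakly decreasing finite sequence of nonnegative integers (zeros allowed/ignored). *)

(* Defs.v *)
From mathcomp Require Import all_boot all_fingroup.
Set Implicit Arguments. Unset Strict Implicit. Unset Printing Implicit Defensive.

(* One-line notation, 1-based: wval w i = w(i) in {1..n} for 1 <= i <= n.
   A permutation w : 'S_n acts on 'I_n = {0..n-1}; w(i) := (w (i-1)) + 1. *)
Definition wval (n : nat) (w : 'S_n) (i : nat) : nat :=
  nth 0 [seq (val (w j)).+1 | j <- enum 'I_n] i.-1.

Definition code_entry (n : nat) (w : 'S_n) (i : nat) : nat :=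
  count (fun k => wval w k < wval w i) (iota i.+1 (n - i)).

Definition code (n : nat) (w : 'S_n) : seq nat :=
  [seq code_entry w i | i <- iota 1 n.-1].

Definition alpha (n : nat) (w : 'S_n) (i : nat) : nat := nth 0 (code w) i.-1.

(* block boundaries: bnd n ks 0 = k_0 = 0, bnd n ks j = k_j (1<=j<=r),
   bnd n ks (r+1) = n *)
Definition bnd (n : nat) (ks : seq nat) (j : nat) : nat := nth n (0 :: ks) j.

Definition in_W (n : nat) (ks : seq nat) (w : 'S_n) : Prop :=
  forall j, j <= size ks ->
    forall i, bnd n ks j < i -> i < bnd n ks j.+1 -> wval w i < wval w i.+1.

Definition lambda (n : nat) (ks : seq nat) (w : 'S_n) (j : nat) : seq nat :=
  [seq alpha w i | i <- rev (iota (bnd n ks j.-1).+1 (bnd n ks j - bnd n ks j.-1))].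

Definition is_partition (s : seq nat) : bool := sorted geq s.

(* canonical representative of a partition: zeros ignored (removed) *)
Definition parts (s : seq nat) : seq nat := [seq x <- s | 0 < x].

Definition fits_in (a b : nat) (s : seq nat) : bool :=
  (size (parts s) <= a) && all (fun x => x <= b) s.

(* P_j, on canonical representatives (partitions without zero parts) *)
Definition in_P (n : nat) (ks : seq nat) (j : nat) (mu : seq nat) : bool :=
  [&& is_partition mu, all (fun x => 0 < x) mu &
      fits_in (bnd n ks j - bnd n ks j.-1) (n - bnd n ks j) mu].

Definition lambda_map (n : nat) (ks : seq nat) (w : 'S_n) : seq (seq nat) :=
  [seq parts (lambda ks w j) | j <- iota 1 (size ks)].

(* Main.v *)
Require Import Defs.
From mathcomp Require Import all_boot all_fingroup zify.
Set Implicit Arguments. Unset Strict Implicit. Unset Printing Implicit Defensive.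

Definition C (s : seq nat) p := count (fun y => y < nth 0 s p) (drop p.+1 s).

Lemma count_lt_mono x y t : x < y -> x \in t ->
  count (fun z => z < x) t < count (fun z => z < y) t.
Proof.
elim: t => [//|z t IH] xy /=; rewrite inE => /orP [/eqP <-|xt].
  rewrite ltnn xy add0n add1n ltnS; apply: sub_count => w /= wx.
  exact: ltn_trans wx xy.
have := IH xy xt; case hzx: (z < x); case hzy: (z < y) => //=.
- by rewrite (ltn_trans hzx xy) in hzy.
- by rewrite add0n add1n; move=> h; rewrite ltnW.
Qed.

Lemma code_inj s t : uniq s -> perm_eq s t ->
  (forall i, i < size s -> C s i = C t i) -> s = t.
Proof.
elim: s t => [|x s IH] [|y t] //=.
- by move=> _ /perm_size.
- by move=> _ /perm_size.
move=> /andP [xs us] pst hC.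
have h0 := hC 0 isT; rewrite /C /= !drop0 in h0.
have cx : count (fun z => z < x) s = count (fun z => z < x) (x :: s) by rewrite /= ltnn.
have cy : count (fun z => z < y) (y :: t) = count (fun z => z < y) t by rewrite /= ltnn.
have ey : count (fun z => z < y) (x :: s) = count (fun z => z < y) (y :: t)
  by move/seq.permP: pst.
have xy : x = y.
  have yin : y \in x :: s by rewrite (perm_mem pst) mem_head.
  have xin : x \in x :: s by rewrite mem_head.
  case: (ltngtP x y) => // hxy.
  - have := count_lt_mono hxy xin. by rewrite ey cy -h0 cx ltnn.
  - have := count_lt_mono hxy yin. by rewrite ey cy -h0 cx ltnn.
subst y; congr (_ :: _); apply: IH => //.
  by rewrite perm_cons in pst.
by move=> i hi; have := hC i.+1 hi.
Qed.

Lemma count_sorted_nth u a : sorted ltn u -> a < size u ->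
  count (fun y => y < nth 0 u a) u = a.
Proof.
elim: u a => [//|z u IH] a /= hp.
have hall := order_path_min ltn_trans hp.
have su : sorted ltn u := path_sorted hp.
have c0 : count (fun y => y < z) u = 0.
  apply/eqP; rewrite -leqn0 leqNgt -has_count; apply/hasPn => y yu.
  by move/allP: hall => /(_ y yu) /= zy; rewrite -leqNgt ltnW.
case: a => [|a] ha /=; first by rewrite ltnn c0.
have zin : nth 0 u a \in u by rewrite mem_nth.
move/allP: hall => /(_ _ zin) /= ->; rewrite IH //.
Qed.

Lemma code_exists S c : uniq S -> size c = size S ->
  (forall i, i < size S -> nth 0 c i < size S - i) ->
  exists s, perm_eq s S /\ forall i, i < size S -> C s i = nth 0 c i.
Proof.
elim: c S => [|a c IH] S uS.
  by move=> hs _; exists [::]; case: S uS hs => //.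
move=> /= hs hb.
have ha : a < size S by have := hb 0; rewrite -hs /= subn0 => ->.
set u := sort leq S.
have su : sorted ltn u by rewrite ltn_sorted_uniq_leq sort_uniq uS sort_sorted //; exact: leq_total.
have szu : size u = size S by rewrite size_sort.
set x := nth 0 u a.
have xS : x \in S by rewrite -(mem_sort leq) mem_nth // szu.
have pS := perm_to_rem xS.
have uS' : uniq (rem x S) by rewrite rem_uniq.
have szS' : size (rem x S) = (size S).-1 by rewrite size_rem.
have [s' [ps' hs']] : exists s, perm_eq s (rem x S) /\
    forall i, i < size (rem x S) -> C s i = nth 0 c i.
  apply: IH => //; first by rewrite szS' -hs.
  move=> i; rewrite szS' -hs /= => hi.
  by have := hb i.+1; rewrite -hs /= subSS; apply.
exists (x :: s'); split.
  by rewrite perm_sym; apply: (perm_trans pS); rewrite perm_cons perm_sym.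
case=> [|i] hi /=.
  rewrite /C /= drop0 (seq.permP ps') count_rem xS ltnn subn0.
  rewrite -(seq.permP (permEl (perm_sort leq S))) -/u count_sorted_nth //.
  by rewrite szu.
rewrite /C /=; apply: hs' ; rewrite szS'.
by move: hi; case: (size S).
Qed.

Lemma C_mono s p : p.+1 < size s -> nth 0 s p < nth 0 s p.+1 -> C s p <= C s p.+1.
Proof.
move=> hp hlt; rewrite /C (drop_nth 0 hp) /= ltnNge (ltnW hlt) /= add0n.
by apply: sub_count => y /= h; apply: ltn_trans h hlt.
Qed.

Lemma C_inc s p : uniq s -> p.+1 < size s -> C s p <= C s p.+1 -> nth 0 s p < nth 0 s p.+1.
Proof.
move=> us hp; rewrite /C (drop_nth 0 hp) /=.
have hne : nth 0 s p != nth 0 s p.+1.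
  by rewrite nth_uniq // ?ltn_eqF // (ltn_trans _ hp).
case: ltngtP hne => // hgt _; rewrite add1n => h; exfalso; move: h; apply/negP; rewrite -ltnNge ltnS.
apply: sub_count => y /= h; apply: ltn_trans h hgt.
Qed.

Lemma C_bound s p : C s p <= size s - p.+1.
Proof. by rewrite /C -size_drop count_size. Qed.

Definition vals n (w : 'S_n) := [seq (val (w j)).+1 | j <- enum 'I_n].

Lemma size_vals n (w : 'S_n) : size (vals w) = n.
Proof. by rewrite size_map size_enum_ord. Qed.

Lemma wvalE n (w : 'S_n) i : wval w i = nth 0 (vals w) i.-1.
Proof. by []. Qed.

Lemma nth_vals n (w : 'S_n) (j : 'I_n) : nth 0 (vals w) j = (val (w j)).+1.
Proof. by rewrite /vals (nth_map j) ?size_enum_ord // nth_ord_enum. Qed.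

Lemma vals_uniq n (w : 'S_n) : uniq (vals w).
Proof.
rewrite map_inj_uniq ?enum_uniq // => i j [] /val_inj; exact: perm_inj.
Qed.

Lemma vals_perm n (w : 'S_n) : perm_eq (vals w) (iota 1 n).
Proof.
apply: uniq_perm; first exact: vals_uniq; first exact: iota_uniq.
have [] // := uniq_min_size (vals_uniq w) (s2 := iota 1 n).
- by move=> x /mapP [j _ ->]; rewrite mem_iota add1n !ltnS ltn_ord.
- by rewrite size_vals size_iota.
Qed.

Lemma vals_inj n (w1 w2 : 'S_n) : vals w1 = vals w2 -> w1 = w2.
Proof.
move=> h; apply/permP => j; apply: val_inj.
by have := nth_vals w1 j; rewrite h nth_vals => -[].
Qed.

Lemma vals_surj n s : perm_eq s (iota 1 n) -> exists w : 'S_n, vals w = s.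
Proof.
move=> ps.
have sz : size s = n by rewrite (perm_size ps) size_iota.
have us : uniq s by rewrite (perm_uniq ps) iota_uniq.
have hin : forall j : 'I_n, 0 < nth 0 s j <= n.
  move=> j; have : nth 0 s j \in iota 1 n by rewrite -(perm_mem ps) mem_nth // sz.
  by rewrite mem_iota add1n ltnS.
pose f (j : 'I_n) : 'I_n := insubd j (nth 0 s j).-1.
have fv : forall j, val (f j) = (nth 0 s j).-1.
  move=> j; rewrite /f val_insubd; have /andP [h1 h2] := hin j.
  by rewrite prednK // h2.
have finj : injective f.
  move=> i j /(congr1 val); rewrite !fv => e.
  have /andP [hi _] := hin i; have /andP [hj _] := hin j.
  have e' : nth 0 s i = nth 0 s j by rewrite -(prednK hi) -(prednK hj) e.
  by apply: val_inj; move: e'; move/eqP; rewrite nth_uniq ?sz // => /eqP.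
exists (perm finj); apply: (@eq_from_nth _ 0); first by rewrite size_vals sz.
move=> i; rewrite size_vals => hi.
have := nth_vals (perm finj) (Ordinal hi); rewrite /= => ->.
by rewrite permE fv prednK //; have /andP [] := hin (Ordinal hi).
Qed.

Lemma code_entryE n (w : 'S_n) i : 0 < i <= n -> code_entry w i = C (vals w) i.-1.
Proof.
case: i => [//|i] /= hi.
rewrite /code_entry /C.
transitivity (count (fun y => y < wval w i.+1) (map (wval w) (iota i.+2 (n - i.+1)))).
  by rewrite count_map.
rewrite wvalE /=; congr count.
rewrite -[i.+2]add1n iotaDl -map_comp.
rewrite (eq_map (g := nth 0 (vals w))); last by move=> k /=; rewrite wvalE add1n.
rewrite map_nth_iota ?size_vals //.
by rewrite take_oversize // size_drop size_vals.
Qed.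

Lemma alphaE n (w : 'S_n) i : 0 < i < n -> alpha w i = C (vals w) i.-1.
Proof.
move=> /andP [h1 h2].
have hi : i.-1 < n.-1 by lia.
rewrite /alpha /code (nth_map 0); last by rewrite size_iota.
rewrite nth_iota // add1n prednK // code_entryE //.
by rewrite h1 ltnW.
Qed.

Lemma bnd_lt n ks : 0 < size ks -> sorted ltn (0 :: ks) -> all (fun k => k < n) ks ->
  forall j, j <= size ks -> bnd n ks j < bnd n ks j.+1.
Proof.
move=> Hr Hs Ha j hj; rewrite /bnd.
case: (ltnP j (size ks)) => hj2.
  apply: (sorted_ltn_nth ltn_trans n Hs) => //.
have -> : j = size ks by apply/eqP; rewrite eqn_leq hj hj2.
rewrite [nth n (0 :: ks) (size ks).+1]nth_default //=.
case: ks Hr Hs Ha {hj hj2} => [|k ks] // _ Hs Ha.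
by apply: (allP Ha); rewrite /= mem_nth.
Qed.

Lemma bnd_mono n ks : 0 < size ks -> sorted ltn (0 :: ks) -> all (fun k => k < n) ks ->
  forall i j, i <= j -> j <= (size ks).+1 -> bnd n ks i <= bnd n ks j.
Proof.
move=> Hr Hs Ha i j hij; elim: j hij => [|j IH]; first by rewrite leqn0 => /eqP ->.
rewrite leq_eqVlt => /orP [/eqP -> //|]; rewrite ltnS => hij hj.
by apply: leq_trans (IH hij (ltnW hj)) (ltnW (bnd_lt Hr Hs Ha _)).
Qed.

Lemma bnd0 n ks : bnd n ks 0 = 0. Proof. by []. Qed.
Lemma bndr n ks : bnd n ks (size ks).+1 = n.
Proof. by rewrite /bnd nth_default. Qed.

Lemma find_eq (T : Type) (x0 : T) (a : pred T) s i : i <= size s ->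
  (i < size s -> a (nth x0 s i)) -> (forall k, k < i -> ~~ a (nth x0 s k)) ->
  find a s = i.
Proof.
move=> hi h1 h2; case: (ltngtP (find a s) i) => // h.
  have hs : has a s by rewrite has_find (leq_trans h hi).
  by have := h2 _ h; rewrite nth_find.
have hi' : i < size s by apply: leq_trans h (find_size _ _).
by have := h1 hi'; rewrite before_find.
Qed.

Lemma blk_eq n ks : 0 < size ks -> sorted ltn (0 :: ks) -> all (fun k => k < n) ks ->
  forall j p, j <= size ks -> bnd n ks j <= p -> p < bnd n ks j.+1 ->
  find (fun k => p < k) ks = j.
Proof.
move=> Hr Hs Ha j p hj h1 h2; apply: (@find_eq nat n (fun k => p < k) ks j) => //.
move=> k hk; rewrite -leqNgt.
change (bnd n ks k.+1 <= p); apply: leq_trans h1.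
by apply: (bnd_mono Hr Hs Ha); lia.
Qed.

Lemma find_block n ks : 0 < size ks -> sorted ltn (0 :: ks) -> all (fun k => k < n) ks ->
  forall p, p < n -> exists j, j <= size ks /\ bnd n ks j <= p < bnd n ks j.+1.
Proof.
move=> Hr Hs Ha p hp.
have ex : exists j, p < bnd n ks j by exists (size ks).+1; rewrite bndr.
case: (ex_minnP ex) => m hm hmin.
case: m hm hmin => [|m] hm hmin; first by [].
exists m; rewrite hm andbT; split.
  rewrite -ltnS; case: (ltnP (size ks) m) => // h.
  have := hmin (size ks).+1; rewrite bndr => /(_ hp); lia.
by case: (leqP (bnd n ks m) p) => // h; have := hmin _ h; lia.
Qed.

Lemma inW_s n ks (w : 'S_n) : in_W ks w -> forall j p, j <= size ks ->
  bnd n ks j <= p -> p.+1 < bnd n ks j.+1 -> nth 0 (vals w) p < nth 0 (vals w) p.+1.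
Proof. by move=> H j p hj h1 h2; have := H j hj p.+1 h1 h2; rewrite !wvalE. Qed.

Lemma bnd_le_n n ks : 0 < size ks -> sorted ltn (0 :: ks) -> all (fun k => k < n) ks ->
  forall j, bnd n ks j <= n.
Proof.
move=> Hr Hs Ha j; case: (leqP j (size ks).+1) => hj.
  by rewrite -{2}(bndr n ks); apply: bnd_mono.
by rewrite /bnd nth_default //=; lia.
Qed.

Lemma block_bound n ks (w : 'S_n) : 0 < size ks -> sorted ltn (0 :: ks) -> all (fun k => k < n) ks ->
  in_W ks w -> forall j p, j <= size ks -> bnd n ks j <= p -> p < bnd n ks j.+1 ->
  C (vals w) p <= n - bnd n ks j.+1.
Proof.
move=> Hr Hs Ha HW j p hj h1 h2.
have hn := bnd_le_n Hr Hs Ha j.+1.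
move: {2}(bnd n ks j.+1 - p.+1) (erefl (bnd n ks j.+1 - p.+1)) => d.
elim: d p h1 h2 => [|d IH] p h1 h2 hd.
  have -> : bnd n ks j.+1 = p.+1 by lia.
  by have := C_bound (vals w) p; rewrite size_vals.
apply: leq_trans (IH p.+1 _ _ _); [|lia|lia|lia].
apply: C_mono; first by rewrite size_vals; lia.
apply: (inW_s HW hj) => //; lia.
Qed.

Lemma bnd_lt_n n ks : 0 < size ks -> sorted ltn (0 :: ks) -> all (fun k => k < n) ks ->
  forall j, j <= size ks -> bnd n ks j < n.
Proof.
move=> Hr Hs Ha j hj; apply: leq_trans (bnd_lt Hr Hs Ha hj) _.
exact: bnd_le_n.
Qed.

Lemma sorted_map_iota (f : nat -> nat) m k :
  (forall i, m <= i -> i.+1 < m + k -> f i <= f i.+1) -> sorted leq (map f (iota m k)).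
Proof.
elim: k m => [//|k IH] m h /=.
case: k IH h => [//|k] IH h /=.
rewrite h ?leqnn //; last by lia.
have := IH m.+1; rewrite /= => -> // i hi1 hi2; apply: h; lia.
Qed.

Lemma part1 n ks (w : 'S_n) : 0 < size ks -> sorted ltn (0 :: ks) -> all (fun k => k < n) ks ->
  in_W ks w -> forall j, 1 <= j <= size ks ->
       is_partition (lambda ks w j) /\
       fits_in (bnd n ks j - bnd n ks j.-1) (n - bnd n ks j) (lambda ks w j).
Proof.
move=> Hr Hs Ha HW [//|j] /= hj.
have hlt := bnd_lt Hr Hs Ha (ltnW hj).
have hln := bnd_lt_n Hr Hs Ha hj.
split.
  rewrite /is_partition /lambda /= map_rev rev_sorted.
  apply: (sub_sorted (e := leq)); first by move=> x y.
  apply: sorted_map_iota => i hi1 hi2.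
  rewrite !alphaE; try (apply/andP; split; lia).
  rewrite /= -{2}(prednK (leq_ltn_trans (leq0n _) hi1)); apply: C_mono; first by rewrite size_vals; lia.
  apply: (inW_s HW (j := j)); lia.
rewrite /fits_in /lambda /=; apply/andP; split.
  rewrite size_filter; apply: leq_trans (count_size _ _) _.
  by rewrite size_map size_rev size_iota.
apply/allP => x /mapP [i]; rewrite mem_rev mem_iota => hi ->.
rewrite alphaE; last by apply/andP; split; lia.
apply: (block_bound Hr Hs Ha HW (ltnW hj)); lia.
Qed.

Lemma geq_trans' : transitive geq.
Proof. by move=> y x z h1 h2 /=; exact: leq_trans h2 h1. Qed.

Lemma parts_decomp l : sorted geq l -> l = parts l ++ nseq (size l - size (parts l)) 0.
Proof.
elim: l => [//|x l IH] /= hp.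
case: x hp => [|x] hp /=.
  have hall := order_path_min geq_trans' hp.
  have : all (pred1 0) l by apply: sub_all hall => y /=; rewrite leqn0.
  move/all_pred1P => ->; rewrite /parts filter_nseq /= size_nseq //.
by congr (_ :: _); rewrite subSS -(IH (path_sorted hp)).
Qed.

Lemma parts_inj l1 l2 : sorted geq l1 -> sorted geq l2 -> size l1 = size l2 ->
  parts l1 = parts l2 -> l1 = l2.
Proof.
move=> h1 h2 hs hp; rewrite (parts_decomp h1) (parts_decomp h2) hs hp //.
Qed.

Lemma nth_le_all mu b i : all (fun x => x <= b) mu -> nth 0 mu i <= b.
Proof.
move=> h; case: (ltnP i (size mu)) => hi; first by apply: (allP h); rewrite mem_nth.
by rewrite nth_default.
Qed.

Lemma nth_sorted_geq mu a b : sorted geq mu -> a <= b -> nth 0 mu b <= nth 0 mu a.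
Proof.
move=> hs hab; case: (ltnP b (size mu)) => hb; last by rewrite nth_default.
have := sorted_leq_nth geq_trans' (fun x => leqnn x) 0 hs.
by move=> /(_ a b); apply => //; rewrite inE /=; lia.
Qed.

Lemma nth_lambda_map n ks (w : 'S_n) j : j < size ks ->
  nth [::] (lambda_map ks w) j = parts (lambda ks w j.+1).
Proof.
by move=> hj; rewrite /lambda_map (nth_map 0) ?size_iota // nth_iota // add1n.
Qed.

Lemma parts_pad mu k : all (fun x => 0 < x) mu -> parts (mu ++ nseq k 0) = mu.
Proof.
by move=> h; rewrite /parts filter_cat filter_nseq /= cats0; apply/all_filterP.
Qed.

Lemma part2 n ks (w : 'S_n) : 0 < size ks -> sorted ltn (0 :: ks) -> all (fun k => k < n) ks ->
  in_W ks w -> forall j, 1 <= j <= size ks -> in_P n ks j (nth [::] (lambda_map ks w) j.-1).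
Proof.
move=> Hr Hs Ha HW [//|j] hj; rewrite /= nth_lambda_map //.
have [hp /andP [hf1 hf2]] := part1 Hr Hs Ha HW hj.
rewrite /in_P /is_partition sorted_filter ?filter_all //=; last exact: geq_trans'.
rewrite /fits_in /parts filter_id hf1 /=.
by rewrite all_filter; apply: sub_all hf2 => x /= ->; rewrite implybT.
Qed.

Lemma part3 n ks (w1 w2 : 'S_n) : 0 < size ks -> sorted ltn (0 :: ks) -> all (fun k => k < n) ks ->
  in_W ks w1 -> in_W ks w2 -> lambda_map ks w1 = lambda_map ks w2 -> w1 = w2.
Proof.
move=> Hr Hs Ha H1 H2 Heq; apply: vals_inj; apply: code_inj.
- exact: vals_uniq.
- by apply: (perm_trans (vals_perm w1)); rewrite perm_sym; apply: vals_perm.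
move=> i; rewrite size_vals => hi.
have [j [hj /andP [h1 h2]]] := find_block Hr Hs Ha hi.
case: (ltnP j (size ks)) => hjr; last first.
  have ej : j = size ks by lia.
  have b1 := block_bound Hr Hs Ha H1 hj h1 h2.
  have b2 := block_bound Hr Hs Ha H2 hj h1 h2.
  move: b1 b2; rewrite ej bndr; lia.
have e := congr1 (nth [::]^~ j) Heq; rewrite /= !nth_lambda_map // in e.
have hj' : 1 <= j.+1 <= size ks by [].
have [p1 _] := part1 Hr Hs Ha H1 hj'.
have [p2 _] := part1 Hr Hs Ha H2 hj'.
have el := parts_inj p1 p2 (ltac:(by rewrite !size_map)) e.
have hlt := bnd_lt_n Hr Hs Ha hjr.
have := (eq_in_map _ _ _).2 el i.+1.
rewrite mem_rev mem_iota /= !alphaE //; try (apply/andP; split; lia).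
by apply; apply/andP; split; lia.
Qed.

Lemma part4 n ks : 0 < size ks -> sorted ltn (0 :: ks) -> all (fun k => k < n) ks ->
  forall mus : seq (seq nat), size mus = size ks ->
     (forall j, 1 <= j <= size ks -> in_P n ks j (nth [::] mus j.-1)) ->
     exists w : 'S_n, in_W ks w /\ lambda_map ks w = mus.
Proof.
move=> Hr Hs Ha mus Hsz HP.
pose blk p := find (fun k => p < k) ks.
pose cf p := nth 0 (nth [::] mus (blk p)) (bnd n ks (blk p).+1 - p.+1).
have HPj : forall j, sorted geq (nth [::] mus j) /\
    all (fun x => x <= n - bnd n ks j.+1) (nth [::] mus j).
  move=> j; case: (ltnP j (size ks)) => hj; last by rewrite nth_default ?Hsz.
  have := HP j.+1; rewrite /= => /(_ hj) /and3P [h1 _ /andP [_ h3]]; by split.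
have hblk : forall j p, j <= size ks -> bnd n ks j <= p -> p < bnd n ks j.+1 -> blk p = j.
  by move=> j p; apply: blk_eq.
have hcf : forall p, p < n -> cf p < n - p.
  move=> p hp; have [j [hj /andP [h1 h2]]] := find_block Hr Hs Ha hp.
  rewrite /cf (hblk j p) //.
  have := nth_le_all (bnd n ks j.+1 - p.+1) (HPj j).2.
  have := bnd_le_n Hr Hs Ha j.+1; lia.
have [s [ps hC]] : exists s, perm_eq s (iota 1 n) /\
    forall i, i < size (iota 1 n) -> C s i = nth 0 (mkseq cf n) i.
  apply: code_exists; first exact: iota_uniq.
    by rewrite size_mkseq size_iota.
  by move=> i; rewrite size_iota => hi; rewrite nth_mkseq //; apply: hcf.
have hC' : forall i, i < n -> C s i = cf i.
  by move=> i hi; rewrite hC ?size_iota // nth_mkseq.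
have [w ew] := vals_surj ps.
exists w; split.
  move=> j hj i h1 h2; rewrite !wvalE /=.
  have hn := bnd_le_n Hr Hs Ha j.+1.
  have i0 : 0 < i by lia.
  rewrite -{2}(prednK i0) ew; apply: C_inc.
  - by rewrite -ew; apply: vals_uniq.
  - by rewrite -ew size_vals; lia.
  rewrite !hC'; try lia.
  rewrite /cf (hblk j i.-1) ?(hblk j i.-1.+1) //; try lia.
  by apply: nth_sorted_geq; [exact: (HPj j).1 | lia].
apply: (@eq_from_nth _ [::]); first by rewrite size_map size_iota Hsz.
move=> t; rewrite size_map size_iota => ht.
rewrite nth_lambda_map //.
have := HP t.+1; rewrite /= => /(_ ht) /and3P [hp hpos /andP [hsz hall]].
set mu := nth [::] mus t in hp hpos hsz hall *.
have hlt := bnd_lt Hr Hs Ha (ltnW ht).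
have hln := bnd_lt_n Hr Hs Ha ht.
have emu : parts mu = mu by apply/all_filterP.
rewrite emu in hsz.
set a := bnd n ks t.+1 - bnd n ks t in hsz *.
suff -> : lambda ks w t.+1 = mu ++ nseq (a - size mu) 0 by rewrite parts_pad.
apply: (@eq_from_nth _ 0).
  by rewrite /lambda /= size_map size_rev size_iota size_cat size_nseq; lia.
move=> q; rewrite /lambda /= size_map size_rev size_iota -/a => hq.
rewrite (nth_map 0) ?size_rev ?size_iota // nth_rev ?size_iota // nth_iota; last by lia.
rewrite alphaE; last by apply/andP; split; lia.
rewrite ew hC'; last by lia.
rewrite /cf (hblk t); try lia.
have -> : bnd n ks t.+1 - ((bnd n ks t).+1 + (a - q.+1)).-1.+1 = q by lia.
rewrite nth_cat; case: (ltnP q (size mu)) => // hq2.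
by rewrite nth_nseq if_same nth_default.
Qed.

Unset Implicit Arguments.

Theorem proposition2p3 (n : nat) (ks : seq nat) :
  2 <= n ->
  0 < size ks ->
  sorted ltn (0 :: ks) ->
  all (fun k => k < n) ks ->
  (* each lambda^j(w) is a partition fitting in the (k_j-k_{j-1}) x (n-k_j) box *)
  (forall w : 'S_n, in_W ks w ->
     forall j, 1 <= j <= size ks ->
       is_partition (lambda ks w j) /\
       fits_in (bnd n ks j - bnd n ks j.-1) (n - bnd n ks j) (lambda ks w j)) /\
  (* the map lands in prod_j P_j *)
  (forall w : 'S_n, in_W ks w ->
     forall j, 1 <= j <= size ks -> in_P n ks j (nth [::] (lambda_map ks w) j.-1)) /\
  (* injective on W^Theta *)
  (forall w1 w2 : 'S_n, in_W ks w1 -> in_W ks w2 ->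
     lambda_map ks w1 = lambda_map ks w2 -> w1 = w2) /\
  (* surjective onto prod_j P_j *)
  (forall mus : seq (seq nat), size mus = size ks ->
     (forall j, 1 <= j <= size ks -> in_P n ks j (nth [::] mus j.-1)) ->
     exists w : 'S_n, in_W ks w /\ lambda_map ks w = mus).
Proof.
move=> _ Hr Hs Ha; split; [|split; [|split]].
- by move=> w HW; apply: part1.
- by move=> w HW; apply: part2.
- by move=> w1 w2 H1 H2; apply: part3.
- exact: part4.
Qed.
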